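(* Let a locally compact group $G$ act continuously on a locally compact space $X$. Let $(g_i)_{i\ge0}$ be a sequence in $G$ and $\mu$ a probability measure on $X$ such that $(g_i\cdot\mu)_{i\ge0}$ converges weakly to some $\mu_\infty$. Assume there is a sequence $(h_i)_{i\ge0}$ in $G$ converging to the identity such that $(h_i\cdot\mu)_{i\ge0}$ converges strongly to $\mu$, and such that $(g_ih_ig_i^{-1})_{i\ge0}$ has a limit point $g_\infty$ in $G$. Then $g_\infty\cdot\mu_\infty=\mu_\infty$.
   Context: A sequence $(\mu_i)$ of bounded measures converges strongly to $\mu_\infty$ if there is a real sequence $\epsilon_i\to0$ such that $|(\mu_i-\mu_\infty)(\varphi)|\le\epsilon_i\|\varphi\|_\infty$ for every bounded measurable function $\varphi$. Weak convergence means convergence against compactly supported continuous functions. *)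

(* Defs.v *)
From HB Require Import structures.
From mathcomp Require Import all_boot all_order all_algebra.
From mathcomp Require Import all_classical all_reals all_analysis.

Set Implicit Arguments.
Unset Strict Implicit.
Unset Printing Implicit Defensive.

Import Order.TTheory GRing.Theory Num.Theory.
Import numFieldNormedType.Exports.

Local Open Scope classical_set_scope.
Local Open Scope ring_scope.

Definition borelType (X : ptopologicalType) := g_sigma_algebraType (@open X).

Definition Cc (X : ptopologicalType) (R : realType) (phi : X -> R) : Prop :=
  continuous phi /\
  exists K : set X, compact K /\ (forall x, ~ K x -> phi x = 0).

Definition bounded_fun (T : Type) (R : realType) (phi : T -> R) : Prop :=
  exists M : R, forall x, `|phi x| <= M.

Definition supnorm (T : Type) (R : realType) (phi : T -> R) : R :=
  sup [set `|phi x| | x in [set: T]].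

Lemma continuous_borel_measurable (X Y : ptopologicalType) (f : X -> Y) :
  continuous f -> measurable_fun [set: borelType X] (f : borelType X -> borelType Y).
Proof.
move=> cf.
apply: (@measurability _ _ (borelType X) (borelType Y) setT _ (@open Y)).
  by [].
move=> _ [A oA <-]; apply: sub_sigma_algebra; rewrite setTI.
by apply: open_comp => // x _; exact: cf.
Qed.

Section PushMeasure.
Context d d' (T1 : measurableType d) (T2 : measurableType d') (R : realType).
Variables (f : T1 -> T2) (mf : measurable_fun [set: T1] f).
Variable (m : {measure set T1 -> \bar R}).

Definition pushm : set T2 -> \bar R := let _ := mf in pushforward m f.

Let pushm0 : pushm set0 = 0%E.
Proof. by rewrite /pushm /pushforward preimage_set0 measure0. Qed.

Let pushm_ge0 A : (0 <= pushm A)%E.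
Proof. exact: measure_ge0. Qed.

Let pushm_sigma_additive : semi_sigma_additive pushm.
Proof.
move=> F mF tF mUF; rewrite /pushm /pushforward preimage_bigcup.
apply: measure_semi_sigma_additive.
- by move=> n; rewrite -[X in measurable X]setTI; exact: mf.
- apply/trivIsetP => /= i j _ _ ij; rewrite -preimage_setI.
  by move/trivIsetP : tF => /(_ _ _ _ _ ij) ->//; rewrite preimage_set0.
- by rewrite -preimage_bigcup -[X in measurable X]setTI; exact: mf.
Qed.

HB.instance Definition _ := isMeasure.Build _ _ _
  pushm pushm0 pushm_ge0 pushm_sigma_additive.

End PushMeasure.

Lemma act_continuous (G : topologicalType) (X : ptopologicalType)
  (act : G -> X -> X) (act_cont : continuous (fun p : G * X => act p.1 p.2))
  (g : G) : continuous (act g).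
Proof.
move=> x.
have -> : act g = (fun p : G * X => act p.1 p.2) \o (fun y => (g, y)) by [].
apply: continuous_comp; last exact: act_cont.
by apply: cvg_pair => //; exact: cvg_cst.
Qed.

(* The image g . m of a measure m on X under the action:
   (g . m)(A) = m (g^-1 A) = m (act g @^-1` A). *)
Definition act_meas (G : topologicalType) (X : ptopologicalType) (R : realType)
  (act : G -> X -> X) (act_cont : continuous (fun p : G * X => act p.1 p.2))
  (g : G) (m : {measure set borelType X -> \bar R})
  : {measure set borelType X -> \bar R} :=
  @pushm _ _ (borelType X) (borelType X) R (act g) (@continuous_borel_measurable X X (act g) (@act_continuous G X act act_cont g)) m.

Definition weak_cvg (X : ptopologicalType) (R : realType)
  (mus : nat -> {measure set borelType X -> \bar R}) (m : {measure set borelType X -> \bar R})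
  : Prop :=
  forall phi : X -> R, Cc phi ->
    (fun i => (\int[mus i]_x (phi x)%:E)%E) @ \oo --> (\int[m]_x (phi x)%:E)%E.

Definition strong_cvg (X : ptopologicalType) (R : realType)
  (mus : nat -> {measure set borelType X -> \bar R}) (m : {measure set borelType X -> \bar R})
  : Prop :=
  exists eps : nat -> R, eps @ \oo --> 0 /\
    forall (i : nat) (phi : borelType X -> R),
      measurable_fun [set: borelType X] phi -> bounded_fun phi ->
      (`| \int[mus i]_x (phi x)%:E - \int[m]_x (phi x)%:E | <=
        (eps i * supnorm phi)%:E)%E.

(* Equality of measures as Radon measures (i.e. as functionals on C_c(X)). *)
Definition radon_eq (X : ptopologicalType) (R : realType)
  (m1 m2 : {measure set borelType X -> \bar R}) : Prop :=
  forall phi : X -> R, Cc phi ->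
    (\int[m1]_x (phi x)%:E = \int[m2]_x (phi x)%:E)%E.

(* Main.v *)
Require Import Defs.
From HB Require Import structures.
From mathcomp Require Import all_boot all_order all_algebra.
From mathcomp Require Import all_classical all_reals all_analysis.

From mathcomp Require Import measurable_realfun ring lra.
Import Order.TTheory GRing.Theory Num.Theory.
Import numFieldNormedType.Exports.

Local Open Scope classical_set_scope.
Local Open Scope ring_scope.

Lemma cont_measR (X : ptopologicalType) (R : realType) (f : X -> R) :
  continuous f -> measurable_fun [set: borelType X] (f : borelType X -> R).
Proof.
move=> /continuousP cf.
apply: (measurability _ (measurable_realfun.RGenOpens.measurableE R)).
move=> _ [_ [a [b ->]] <-]; apply: sub_sigma_algebra; rewrite setTI.
exact/cf/interval_open.
Qed.

Lemma int_push d d' (T1 : measurableType d) (T2 : measurableType d') (R : realType)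
  (f : T1 -> T2) (mf : measurable_fun [set: T1] f) (m : {measure set T1 -> \bar R})
  (phi : T2 -> \bar R) : measurable_fun [set: T2] phi ->
  (\int[pushm mf m]_x phi x = \int[m]_x phi (f x))%E.
Proof.
move=> mphi.
have -> : (\int[pushm mf m]_x phi x = \int[pushforward m f]_x phi x)%E by [].
rewrite [RHS]integralE [LHS]integralE.
have P1 := @ge0_integral_pushforward _ _ T1 T2 R f mf m setT (phi^\+)%E measurableT
  (measurable_funepos mphi) (fun y _ => funepos_ge0 _ _).
have P2 := @ge0_integral_pushforward _ _ T1 T2 R f mf m setT (phi^\-)%E measurableT
  (measurable_funeneg mphi) (fun y _ => funeneg_ge0 _ _).
rewrite preimage_setT in P1 P2.
congr (_ - _)%E.
  transitivity (\int[m]_x (phi^\+ \o f) x)%E; first exact P1.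
  by apply: eq_integral => x _; rewrite /comp !funeposE.
transitivity (\int[m]_x (phi^\- \o f) x)%E; first exact P2.
by apply: eq_integral => x _; rewrite /comp !funenegE.
Qed.

Lemma int_bound d (T : measurableType d) (R : realType)
  (m : {measure set T -> \bar R}) (f : T -> R) (M : R) :
  m setT = 1%E -> measurable_fun setT f -> (forall x, `|f x| <= M) ->
  (`|\int[m]_x (f x)%:E| <= M%:E)%E.
Proof.
move=> m1 mf fM.
apply: (le_trans (le_abse_integral _ _ _)) => //.
  exact/measurable_EFinP.
apply: (@le_trans _ _ (\int[m]_x (cst M%:E x))%E).
  apply: ge0_le_integral => //.
  - apply/measurable_EFinP; exact: measurableT_comp.
  - by move=> x _; rewrite /= lee_fin.
by rewrite integral_cst // m1 mule1.
Qed.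

Lemma int_integrable d (T : measurableType d) (R : realType)
  (m : {measure set T -> \bar R}) (f : T -> R) (M : R) :
  m setT = 1%E -> measurable_fun setT f -> (forall x, `|f x| <= M) ->
  m.-integrable setT (EFin \o f).
Proof.
move=> m1 mf fM; apply/integrableP; split; first exact/measurable_EFinP.
apply: (@le_lt_trans _ _ (\int[m]_x (cst M%:E x))%E).
  apply: ge0_le_integral => //.
  - apply/measurable_EFinP; exact: measurableT_comp.
  - by move=> x _; rewrite /= lee_fin.
by rewrite integral_cst // m1 mule1 ltry.
Qed.
Arguments int_bound {d T R m f M}.
Arguments int_integrable {d T R m f M}.

Lemma fin_of_bound {R : realType} {x : \bar R} {M : R} :
  (`|x| <= M%:E)%E -> x \is a fin_num /\ `|fine x| <= M.
Proof. by case: x => [r| |] //=; rewrite lee_fin. Qed.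

Lemma lim_eq (R : realType) (a b : nat -> \bar R) (A B : \bar R) (M : R) :
  a @ \oo --> A -> b @ \oo --> B ->
  (forall i, (`|a i| <= M%:E)%E) -> (forall i, (`|b i| <= M%:E)%E) ->
  (forall e : R, 0 < e -> forall N, exists i, (N <= i)%N /\ (`|a i - b i| <= e%:E)%E) ->
  A = B.
Proof.
move=> aA bB aM bM H.
have finA (c : nat -> \bar R) C : c @ \oo --> C -> (forall i, (`|c i| <= M%:E)%E) ->
    exists C', C = C'%:E /\ (fun i => fine (c i)) @ \oo --> C'.
  move=> cC cM.
  have cE i : c i = (fine (c i))%:E by rewrite fineK //; case: (fin_of_bound (cM i)).
  have cB i : `|fine (c i)| <= M by case: (fin_of_bound (cM i)).
  have Cle : (C <= M%:E)%E.
    apply: (cvge_to_le cC); apply: nearW => i.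
    by rewrite cE lee_fin; move: (cB i); rewrite ler_norml => /andP[].
  have Cge : ((- M)%:E <= C)%E.
    apply: (cvge_to_ge cC); apply: nearW => i.
    by rewrite cE lee_fin; move: (cB i); rewrite ler_norml => /andP[].
  have Cf : C \is a fin_num.
    rewrite fin_numElt; apply/andP; split.
      exact: (lt_le_trans (ltNyr _) Cge).
    exact: (le_lt_trans Cle (ltry _)).
  exists (fine C); split; first by rewrite fineK.
  by apply: fine_cvg; rewrite fineK.
have [A' [-> aA']] := finA _ _ aA aM.
have [B' [-> bB']] := finA _ _ bB bM.
congr (_%:E); apply/eqP; rewrite -subr_eq0 -normr_eq0.
rewrite eq_le normr_ge0 andbT; apply/negP => /negP; rewrite -ltNge => hpos.
set e := `|A' - B'| / 3.
have e0 : 0 < e by rewrite divr_gt0.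
have [N1 _ HN1] := cvgr_dist_lt _ _ aA' _ e0.
have [N2 _ HN2] := cvgr_dist_lt _ _ bB' _ e0.
have [i [Ni Hi]] := H e e0 (maxn N1 N2).
have i1 : (N1 <= i)%N by apply: leq_trans Ni; exact: leq_maxl.
have i2 : (N2 <= i)%N by apply: leq_trans Ni; exact: leq_maxr.
have h1 := HN1 i i1; have h2 := HN2 i i2.
have [fa _] := fin_of_bound (aM i).
have [fb _] := fin_of_bound (bM i).
move: Hi; rewrite -(fineK fa) -(fineK fb) -EFinB abse_EFin lee_fin => Hi.
have T : `|A' - B'| <= `|A' - fine (a i)| + `|fine (a i) - fine (b i)| + `|fine (b i) - B'|.
  have -> : A' - B' = (A' - fine (a i)) + (fine (a i) - fine (b i)) + (fine (b i) - B') by ring.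
  by apply: (le_trans (ler_normD _ _)); rewrite lerD2r ler_normD.
rewrite (distrC (fine (b i))) in T.
move: T h1 h2 Hi hpos; rewrite /e => T h1 h2 Hi hpos.
lra.
Qed.

Section Grp.
Variables (G : Type) (mul : G -> G -> G) (inv : G -> G) (e : G).
Hypotheses (mulA : forall a b c, mul a (mul b c) = mul (mul a b) c)
  (mul1g : forall a, mul e a = a) (mulVg : forall a, mul (inv a) a = e).
Lemma mulgV a : mul a (inv a) = e.
Proof.
rewrite -[LHS]mul1g -[X in mul X _](mulVg (inv a)) -mulA (mulA (inv a)).
by rewrite mulVg mul1g mulVg.
Qed.
End Grp.

Lemma unif (R : realType) (G : topologicalType) (mul : G -> G -> G) (inv : G -> G) (e : G)
  (mulA : forall a b c, mul a (mul b c) = mul (mul a b) c)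
  (mul1g : forall a, mul e a = a)
  (mulVg : forall a, mul (inv a) a = e)
  (mul_cont : continuous (fun p : G * G => mul p.1 p.2))
  (inv_cont : continuous inv)
  (X : ptopologicalType) (act : G -> X -> X)
  (act1 : forall x, act e x = x)
  (actM : forall a b x, act (mul a b) x = act a (act b x))
  (act_cont : continuous (fun p : G * X => act p.1 p.2))
  (phi : X -> R) (K : set X) (cphi : continuous phi) (cK : compact K)
  (phiK : forall x, ~ K x -> phi x = 0) (g0 : G) (r : R) (r0 : 0 < r) :
  \forall k \near g0, forall x, `|phi (act k x) - phi (act g0 x)| < r.
Proof.
pose P := fun m y => `|phi (act m y) - phi y| < r.
have W : \forall m \near e, K `<=` P m.
  apply: (proj1 (compact_near_coveringP K) cK G (nbhs e) P) => y Ky.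
  pose F := fun z : X * G => phi (act z.2 z.1) - phi z.1.
  have c1 : (fun z : X * G => phi (act z.2 z.1)) @ (y, e) --> phi (act e y).
    have hs : {for (y, e), continuous (fun z : X * G => (z.2, z.1))}.
      exact: swap_continuous.
    have ha : {for (e, y), continuous (fun p : G * X => phi (act p.1 p.2))}.
      have hh := @continuous_comp _ _ _ (fun p : G * X => act p.1 p.2) phi (e, y) (act_cont (e, y)) (cphi _).
      exact: hh.
    have hh := @continuous_comp _ _ _ _ _ (y, e) hs ha.
    exact: hh.
  have c2 : (fun z : X * G => phi z.1) @ (y, e) --> phi y.
    have hh := @continuous_comp _ _ _ fst phi (y, e) (@cvg_fst _ _ _ _ _) (cphi _).
    exact: hh.
  have cF : F @ (y, e) --> 0.
    have := cvgB c1 c2; rewrite act1 subrr; exact.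
  have h := cvgr_dist_lt _ _ cF _ r0.
  rewrite /prop_near2.
  change (filter_prod (nbhs y) (nbhs e) (fun z : X * G => P z.2 z.1)).
  have h' : filter_prod (nbhs y) (nbhs e) (fun t : X * G => `|0 - F t| < r) := h (@nbhs_filter _ (y, e)).
  apply: (@filterS _ _ (filter_prod_filter (@nbhs_filter X y) (@nbhs_filter G e)) _ _ _ h') => z /=.
  by rewrite sub0r normrN.
have cm : (fun k => mul k (inv g0)) @ g0 --> e.
  rewrite -[X in _ --> X](@mulgV _ _ _ _ mulA mul1g mulVg g0).
  apply: (@continuous_comp _ _ _ (fun k => (k, inv g0)) (fun p : G * G => mul p.1 p.2)).
    by apply: cvg_pair => //; exact: cvg_cst.
  exact: mul_cont.
have cm' : (fun k => mul g0 (inv k)) @ g0 --> e.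
  rewrite -[X in _ --> X](@mulgV _ _ _ _ mulA mul1g mulVg g0).
  apply: (@continuous_comp _ _ _ (fun k => (g0, inv k)) (fun p : G * G => mul p.1 p.2)).
    by apply: cvg_pair => //; [exact: cvg_cst | exact: inv_cont].
  exact: mul_cont.
near=> k => x.
have H1 : K `<=` P (mul k (inv g0)) by near: k; exact: (cm _ W).
have H2 : K `<=` P (mul g0 (inv k)) by near: k; exact: (cm' _ W).
have actV a y : act (inv a) (act a y) = y by rewrite -actM mulVg act1.
have [Kg|nKg] := pselect (K (act g0 x)).
  have := H1 _ Kg; rewrite /P actM actV; exact.
have [Kk|nKk] := pselect (K (act k x)).
  have := H2 _ Kk; rewrite /P actM actV distrC; exact.
by rewrite !phiK // subrr normr0.
Unshelve. all: by end_near.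
Qed.

Theorem mainTheorem15
  (R : realType)
  (G : topologicalType) (mul : G -> G -> G) (inv : G -> G) (e : G)
  (mulA : forall a b c, mul a (mul b c) = mul (mul a b) c)
  (mul1g : forall a, mul e a = a)
  (mulVg : forall a, mul (inv a) a = e)
  (mul_cont : continuous (fun p : G * G => mul p.1 p.2))
  (inv_cont : continuous inv)
  (G_hausdorff : hausdorff_space G)
  (G_lc : locally_compact [set: G])
  (X : ptopologicalType)
  (X_hausdorff : hausdorff_space X)
  (X_lc : locally_compact [set: X])
  (act : G -> X -> X)
  (act1 : forall x, act e x = x)
  (actM : forall a b x, act (mul a b) x = act a (act b x))
  (act_cont : continuous (fun p : G * X => act p.1 p.2))
  (g h : nat -> G)
  (mu : probability (borelType X) R)
  (mu_inf : {measure set (borelType X) -> \bar R})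
  (g_inf : G) :
  weak_cvg (fun i => act_meas act_cont (g i) mu) mu_inf ->
  h @ \oo --> e ->
  strong_cvg (fun i => act_meas act_cont (h i) mu) mu ->
  cluster ((fun i => mul (mul (g i) (h i)) (inv (g i))) @ \oo) g_inf ->
  radon_eq (act_meas act_cont g_inf mu_inf) mu_inf.
Proof.
move=> Hw Hh Hs Hcl phi [cphi [K [cK phiK]]].
have [M HM] : exists M, forall x, `|phi x| <= M.
  have cb : compact (phi @` K).
    by apply: continuous_compact => //; exact: continuous_subspaceT.
  have [M0 [_ HM0]] := compact_bounded cb.
  exists (`|M0| + 1) => x.
  have [Kx|nKx] := pselect (K x).
    by apply: (HM0 (`|M0| + 1)); [rewrite (le_lt_trans (ler_norm _)) // ltrDl | exists x].
  by rewrite phiK // normr0 addr_ge0.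
have M0 : 0 <= M by apply: le_trans (HM point); exact: normr_ge0.
have cphig a : continuous (fun x => phi (act a x)).
  move=> x; exact: (continuous_comp (@act_continuous G X act act_cont a x) (cphi _)).
have mphig a : measurable_fun [set: borelType X] (fun x : borelType X => phi (act a x)).
  exact: cont_measR.
have mphi : measurable_fun [set: borelType X] (phi : borelType X -> R).
  exact: cont_measR.
have actV a y : act (inv a) (act a y) = y by rewrite -actM mulVg act1.
have am1 a : act_meas act_cont a mu setT = 1%E.
  change (mu (act a @^-1` setT) = 1%E).
  by rewrite preimage_setT probability_setT.
have Ccg : Cc (fun x => phi (act g_inf x)).
  split; first exact: cphig.
  exists (act (inv g_inf) @` K); split.
    apply: continuous_compact => //; apply: continuous_subspaceT.
    exact: act_continuous.
  move=> x nK; apply: phiK => Kx; apply: nK.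
  by exists (act g_inf x) => //; rewrite actV.
rewrite /act_meas int_push; last exact/measurable_EFinP.
apply: (@lim_eq R (fun i => \int[act_meas act_cont (g i) mu]_x (phi (act g_inf x))%:E)%E
   (fun i => \int[act_meas act_cont (g i) mu]_x (phi x)%:E)%E _ _ M).
- exact: (Hw _ Ccg).
- exact: (Hw _ (conj cphi (ex_intro _ K (conj cK phiK)))).
- by move=> i; apply: int_bound => //.
- by move=> i; apply: int_bound => //.
move=> eps e0 N.
have e20 : 0 < eps / 2 by rewrite divr_gt0.
have U := @unif R G mul inv e mulA mul1g mulVg mul_cont inv_cont X act act1 actM act_cont
  phi K cphi cK phiK g_inf _ e20.
case: Hs => ep [ep0 Hep].
have epM : (fun i => ep i * (M + 1)) @ \oo --> 0.
  by rewrite -(mul0r (M + 1)); apply: cvgMl.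
have [N1 _ HN1] := cvgr_dist_lt _ _ epM _ e20.
pose A := (fun i => mul (mul (g i) (h i)) (inv (g i))) @` [set i | (maxn N N1 <= i)%N].
have FA : ((fun i => mul (mul (g i) (h i)) (inv (g i))) @ \oo) A.
  by exists (maxn N N1) => // i /= Hi; exists i.
have [_ [[i /= Hi <-] Ui]] := Hcl _ _ FA U.
exists i; split.
  by apply: leq_trans Hi; exact: leq_maxl.
have HN1i := HN1 i (leq_trans (leq_maxr _ _) Hi).
rewrite sub0r normrN normrM (ger0_norm (_ : 0 <= M + 1)) ?addr_ge0 // in HN1i.
set k := mul (mul (g i) (h i)) (inv (g i)) in Ui HN1i *.
have actk y : act k (act (g i) y) = act (g i) (act (h i) y).
  by rewrite /k actM actV actM.
rewrite /act_meas !int_push; last exact/measurable_EFinP.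
  2: exact/measurable_EFinP.
pose c := (\int[mu]_x (phi (act (g i) (act (h i) x)))%:E)%E.
have mpsi := mphig (g i).
have Hcb := Hep i _ mpsi (ex_intro _ M (fun x => HM _)).
rewrite /act_meas int_push /= in Hcb; last exact/measurable_EFinP.
have sup0 : 0 <= supnorm (fun x : borelType X => phi (act (g i) x)).
  have hs : has_ubound [set `|phi (act (g i) x)| | x in [set: borelType X]].
    by exists M => _ [x _ <-]; exact: HM.
  apply: le_trans (normr_ge0 (phi (act (g i) point))) _.
  by apply: ub_le_sup => //; exists point.
have supM : supnorm (fun x : borelType X => phi (act (g i) x)) <= M.
  apply: ge_sup; first by exists `|phi (act (g i) point)|; exists point.
  by move=> _ [x _ <-]; exact: HM.
have cm2 a b : measurable_fun [set: borelType X] (fun x : borelType X => phi (act a (act b x))).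
  apply: (@cont_measR X R (fun x => phi (act a (act b x)))).
  move=> x; exact: (continuous_comp (@act_continuous G X act act_cont b x) (cphig a _)).
have Hac : (`|\int[mu]_x (phi (act g_inf (act (g i) x)))%:E - c| <= (eps / 2)%:E)%E.
  have i1 : mu.-integrable setT (EFin \o (fun x => phi (act g_inf (act (g i) x)))).
    apply: (int_integrable (probability_setT mu) _ (fun x => HM (act _ (act _ x)))).
    apply: (@cont_measR X R (fun x => phi (act g_inf (act (g i) x)))).
    move=> x; exact: (continuous_comp (@act_continuous G X act act_cont (g i) x) (cphig g_inf _)).
  have i2 : mu.-integrable setT (EFin \o (fun x => phi (act (g i) (act (h i) x)))).
    apply: (int_integrable (probability_setT mu) _ (fun x => HM (act _ (act _ x)))).
    apply: (@cont_measR X R (fun x => phi (act (g i) (act (h i) x)))).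
    move=> x; exact: (continuous_comp (@act_continuous G X act act_cont (h i) x) (cphig (g i) _)).
  rewrite /c -(integralB_EFin _ i1 i2) //.
  under eq_integral do rewrite -EFinB.
  apply: (int_bound (probability_setT mu)).
    by apply: measurable_funB; apply: cm2.
  move=> x; rewrite -actk distrC; exact: ltW.
have fa := proj1 (fin_of_bound (int_bound (probability_setT mu) (cm2 g_inf (g i)) (fun x => HM _))).
have fb := proj1 (fin_of_bound (int_bound (probability_setT mu) (mphig (g i)) (fun x => HM _))).
have fc := proj1 (fin_of_bound (int_bound (probability_setT mu) (cm2 (g i) (h i)) (fun x => HM _))).
move: Hac Hcb; rewrite /c -(fineK fa) -(fineK fb) -(fineK fc) -!EFinB !abse_EFin !lee_fin.
set A1 := fine _; set B1 := fine _; set C1 := fine _.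
set s := supnorm _ => Hac Hcb.
have ps : ep i * s <= `|ep i| * (M + 1).
  apply: (le_trans (ler_wpM2r sup0 (ler_norm (ep i)))).
  apply: ler_wpM2l; first exact: normr_ge0.
  by apply: (le_trans supM); rewrite lerDl.
have T : `|A1 - C1| <= `|A1 - B1| + `|B1 - C1|.
  have -> : A1 - C1 = (A1 - B1) + (B1 - C1) by ring.
  exact: ler_normD.
lra.
Qed.
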